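(* Let $c\geq 1$ be a real number and let $G$ be a finite graph whose growth satisfies $f_G(r)\leq cr$ for every positive integer $r$. Then $\operatorname{sep}_{1-\frac{1}{4c}}(G) < 2c$.
   Context: All graphs are finite. The growth of $G$ is the function $f_G\colon\mathbb{N}\to\mathbb{N}$ where $f_G(r)$ is the maximum of $|V(H)|$ over all subgraphs $H$ of $G$ of radius at most $r$. A separation of a graph $H$ is a pair $(A,B)$ of subsets of $V(H)$ with $A\cup B = V(H)$ such that no edge of $H$ has one end in $A\setminus B$ and the other in $B\setminus A$; its order is $|A\cap B|$. For $\alpha\in[\frac23,1)$, a separation $(A,B)$ of an $n$-vertex graph is $\alpha$-balanced if $|A\setminus B|\leq \alpha n$ and $|B\setminus A|\leq\alpha n$. The $\alpha$-separation number $\operatorname{sep}_\alpha(G)$ is the smallest integer $s$ such that every subgraph of $G$ has an $\alpha$-balanced separation of order at most $s$. *)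

(* Defs.v *)
From mathcomp Require Import all_boot all_order all_algebra.
From mathcomp Require Import reals.
Set Implicit Arguments. Unset Strict Implicit. Unset Printing Implicit Defensive.
Import Order.TTheory GRing.Theory Num.Theory.

(* A subgraph H of G is a pair (S, E): a vertex set S and a symmetric set of
   ordered pairs E (each undirected edge {x,y} stored as (x,y) and (y,x)),
   all of which are edges of G with both ends in S. *)
Section Graphs.
Variable T : finType.
Variable e : rel T.

Definition is_subgraph (S : {set T}) (E : {set T * T}) : bool :=
  [forall p in E, [&& e p.1 p.2, p.1 \in S, p.2 \in S & (p.2, p.1) \in E]].

Fixpoint ball (E : {set T * T}) (v : T) (k : nat) : {set T} :=
  if k is k'.+1 then
    ball E v k' :|: [set y | [exists x in ball E v k', (x, y) \in E]]
  else [set v].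

Definition radius_le (S : {set T}) (E : {set T * T}) (r : nat) : bool :=
  [exists v in S, S \subset ball E v r].

Definition growth (r : nat) : nat :=
  \max_(S : {set T}) \max_(E : {set T * T} | is_subgraph S E && radius_le S E r)
     #|S|.

Definition is_separation (S : {set T}) (E : {set T * T}) (A B : {set T}) : bool :=
  (A :|: B == S) &&
  [forall p in E, ~~ ((p.1 \in A :\: B) && (p.2 \in B :\: A))].

Definition sep_order (A B : {set T}) : nat := #|A :&: B|.

Variable R : realType.

Definition balanced (alpha : R) (S A B : {set T}) : bool :=
  ((#|A :\: B|%:R <= alpha * #|S|%:R)%R && (#|B :\: A|%:R <= alpha * #|S|%:R)%R).

Definition sep_ok (alpha : R) (s : nat) : bool :=
  [forall S : {set T}, forall E : {set T * T},
     is_subgraph S E ==>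
     [exists A : {set T}, exists B : {set T},
        [&& is_separation S E A B, balanced alpha S A B & sep_order A B <= s]]].

(* For alpha >= 0 the value
   s = #|T| always works (A = B = V(H)), so the minimum below is taken over a
   range containing a witness and is the genuine minimum. *)
Definition sep_number (alpha : R) : nat :=
  \big[minn/#|T|]_(s < #|T|.+1 | sep_ok alpha s) (s : nat).

End Graphs.

(* Main.v *)
Require Import Defs.
From mathcomp Require Import all_boot all_order all_algebra.
From mathcomp Require Import reals ring lra.
Import Order.TTheory GRing.Theory Num.Theory.
Set Implicit Arguments. Unset Strict Implicit. Unset Printing Implicit Defensive.

Lemma ballS_sub (T : finType) (E : {set T * T}) v k :
  ball E v k \subset ball E v k.+1.
Proof. by rewrite /= subsetUl. Qed.

Lemma ball_mono (T : finType) (E : {set T * T}) v i j :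
  i <= j -> ball E v i \subset ball E v j.
Proof.
move=> /subnK <-; elim: (j - i) => [|d IH] //=.
by apply: subset_trans IH _; rewrite subsetUl.
Qed.

Lemma ball0_in (T : finType) (E : {set T * T}) v k : v \in ball E v k.
Proof. by apply: (subsetP (ball_mono E v (leq0n k))); rewrite /= set11. Qed.

Lemma ball_step (T : finType) (E : {set T * T}) v k x y :
  x \in ball E v k -> (x, y) \in E -> y \in ball E v k.+1.
Proof.
move=> hx hxy; rewrite /= in_setU; apply/orP; right.
by rewrite inE; apply/existsP; exists x; rewrite hx.
Qed.

Lemma ball_inv (T : finType) (E : {set T * T}) v k y :
  y \in ball E v k.+1 -> y \in ball E v k \/ exists2 x, x \in ball E v k & (x, y) \in E.
Proof.
rewrite /= in_setU => /orP [->|]; first by left.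
by rewrite inE => /existsP [x /andP [hx hxy]]; right; exists x.
Qed.

Lemma subg_edge (T : finType) (e : rel T) S E x y :
  is_subgraph e S E -> (x, y) \in E ->
  [/\ e x y, x \in S, y \in S & (y, x) \in E].
Proof.
move=> /forallP /(_ (x, y)) /implyP H /H /and4P [h1 h2 h3 h4]; by split.
Qed.

Lemma ball_sub (T : finType) (e : rel T) S E v k :
  is_subgraph e S E -> v \in S -> ball E v k \subset S.
Proof.
move=> hs hv; elim: k => [|k IH]; first by rewrite /= sub1set.
apply/subsetP => y /ball_inv [/(subsetP IH)//|[x _ hxy]].
by case: (subg_edge hs hxy).
Qed.

Lemma ball_stable (T : finType) (E : {set T * T}) v k :
  ball E v k = ball E v k.+1 -> forall i, k <= i -> ball E v i = ball E v k.
Proof.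
move=> hk i /subnK <-; elim: (i - k) => [|d IH] //.
rewrite addSn /= IH; change (ball E v k.+1 = ball E v k); by rewrite -hk.
Qed.

Lemma ball_growth (T : finType) (e : rel T) S E v r :
  is_subgraph e S E -> (#|ball E v r| <= growth e r)%N.
Proof.
move=> hs.
pose S' := ball E v r.
pose E' := [set p in E | (p.1 \in S') && (p.2 \in S')].
have hsub : is_subgraph e S' E'.
  apply/forallP => p; apply/implyP; rewrite inE => /andP [hp /andP [h1 h2]].
  case: p hp h1 h2 => x y hp h1 h2 /=.
  case: (subg_edge hs hp) => he _ _ hyx.
  by rewrite he h1 h2 inE hyx h1 h2.
have hrad : radius_le S' E' r.
  apply/existsP; exists v; rewrite ball0_in /=.
  suff H : forall k, k <= r -> ball E v k \subset ball E' v k by apply: H.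
  elim => [|k IH] hk //.
  apply/subsetP => y /ball_inv [hy|[x hx hxy]].
    by apply: (subsetP (ballS_sub _ _ _)); apply: (subsetP (IH (ltnW hk))).
  apply: (ball_step (x:=x)); first by apply: (subsetP (IH (ltnW hk))).
  rewrite inE hxy /= /S'.
  rewrite (subsetP (ball_mono E v (ltnW hk)) _ hx).
  by rewrite (subsetP (ball_mono E v hk) _ (ball_step hx hxy)).
rewrite /growth.
apply: (@leq_trans (\max_(E0 : {set T * T} | is_subgraph e S' E0 && radius_le S' E0 r) #|S'|)).
  by apply: (bigop.bigmax_sup E') => //; rewrite hsub hrad.
by apply: (bigop.bigmax_sup S') => //.
Qed.

Lemma ball_eq_of_card (T : finType) (E : {set T * T}) v i :
  #|ball E v i| = #|ball E v i.+1| -> ball E v i = ball E v i.+1.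
Proof. by move=> h; apply/eqP; rewrite eqEcard ballS_sub h leqnn. Qed.

Lemma ball_card_mono (T : finType) (E : {set T * T}) v i j :
  i <= j -> #|ball E v i| <= #|ball E v j|.
Proof. by move=> h; apply: subset_leq_card; apply: ball_mono. Qed.

Lemma ball_card_lb (T : finType) (E : {set T * T}) v m :
  #|ball E v m| < #|ball E v m.+1| -> forall i, i <= m.+1 -> i < #|ball E v i|.
Proof.
move=> hm; elim => [|i IH] hi; first by rewrite /= cards1.
have hst : #|ball E v i| < #|ball E v i.+1|.
  rewrite ltn_neqAle ball_card_mono // andbT; apply/negP => /eqP h.
  have hs := ball_stable (ball_eq_of_card h).
  by move: hm; rewrite (hs m hi) (hs m.+1 (ltnW hi)) ltnn.
by apply: leq_ltn_trans hst; apply: IH; apply: ltnW.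
Qed.

Lemma ball_fix (T : finType) (E : {set T * T}) v :
  exists k : 'I_#|T|.+1, ball E v k = ball E v k.+1.
Proof.
case: (boolP [forall k : 'I_#|T|.+1, #|ball E v k| < #|ball E v k.+1|]).
  move=> /forallP H; exfalso.
  have h := ball_card_lb (H ord_max) (leqnn _).
  by rewrite ltnNge (leq_trans (max_card _) (leqnSn _)) in h.
move=> /forallPn [k]; rewrite -leqNgt => h; exists k.
by apply: ball_eq_of_card; apply/eqP; rewrite eqn_leq h ball_card_mono.
Qed.

Definition closed (T : finType) (S : {set T}) (E : {set T * T}) (X : {set T}) :=
  (X \subset S) && [forall p in E, (p.1 \in X) ==> (p.2 \in X)].

Lemma closedP (T : finType) (S : {set T}) (E : {set T * T}) (X : {set T}) x y :
  closed S E X -> (x, y) \in E -> x \in X -> y \in X.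
Proof.
by move=> /andP [_ /forallP /(_ (x, y))] /implyP H /H /implyP.
Qed.

Lemma ball_closed (T : finType) (e : rel T) S E v k :
  is_subgraph e S E -> v \in S -> ball E v k = ball E v k.+1 -> closed S E (ball E v k).
Proof.
move=> hs hv hk; rewrite /closed (ball_sub k hs hv) /=.
apply/forallP => [[x y]]; apply/implyP => hxy; apply/implyP => /= hx.
by rewrite hk; apply: ball_step hx hxy.
Qed.

Lemma ball_disj (T : finType) (e : rel T) S E v X k :
  is_subgraph e S E -> closed S E X -> v \notin X -> [disjoint ball E v k & X].
Proof.
move=> hs hX hv; elim: k => [|k IH]; first by rewrite /= disjoints1.
rewrite disjoint_subset; apply/subsetP => y /ball_inv [hy|[x hx hxy]].
  by rewrite inE; move: IH; rewrite disjoint_subset => /subsetP /(_ y hy); rewrite inE.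
rewrite inE; apply/negP => hyX.
case: (subg_edge hs hxy) => _ _ _ hyx.
move: IH; rewrite disjoint_subset => /subsetP /(_ x hx); rewrite inE.
by rewrite (closedP hX hyx hyX).
Qed.

Lemma closedU (T : finType) S E (X Y : {set T}) :
  closed S E X -> closed S E Y -> closed S E (X :|: Y).
Proof.
move=> hX hY; rewrite /closed subUset.
move: (hX) (hY) => /andP [-> _] /andP [-> _] /=.
apply/forallP => [[x y]]; apply/implyP => hxy; apply/implyP => /=.
rewrite !in_setU => /orP [h|h]; apply/orP; [left; exact: (closedP hX hxy h)|right; exact: (closedP hY hxy h)].
Qed.

Lemma sep_layer (T : finType) (e : rel T) S E v k :
  is_subgraph e S E -> v \in S ->
  is_separation S E (ball E v k.+1) (S :\: ball E v k).
Proof.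
move=> hs hv; apply/andP; split.
  rewrite eqEsubset subUset (ball_sub k.+1 hs hv) subsetDl /=.
  apply/subsetP => x hx; rewrite in_setU in_setD hx andbT.
  case hb: (x \in ball E v k.+1) => //=; apply/negP => hk.
  by move: hb; rewrite (subsetP (ballS_sub E v k) _ hk).
apply/forallP => [[x y]]; apply/implyP => hxy /=; rewrite !in_setD.
apply/negP => /andP [/andP [hx _] /andP [hy _]].
case: (subg_edge hs hxy) => _ hxS _ _.
have : x \in ball E v k by move: hx; rewrite hxS andbT negbK.
by move=> /ball_step /(_ hxy); rewrite (negbTE hy).
Qed.

Lemma layer_cards (T : finType) (e : rel T) S E v k :
  is_subgraph e S E -> v \in S ->
  [/\ #|ball E v k.+1 :\: (S :\: ball E v k)| = #|ball E v k|,
      #|(S :\: ball E v k) :\: ball E v k.+1| = #|S| - #|ball E v k.+1| &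
      #|ball E v k.+1 :&: (S :\: ball E v k)| = #|ball E v k.+1| - #|ball E v k| ].
Proof.
move=> hs hv.
have s1 := ballS_sub E v k; have s2 := ball_sub k.+1 hs hv.
have s0 := ball_sub k hs hv.
split.
- rewrite setDDr (setIidPr s1) (_ : _ :\: S = set0) ?set0U //.
  by apply/eqP; rewrite setD_eq0.
- have h2 : S :&: ball E v k.+1 = ball E v k.+1 by apply/setIidPr.
  by rewrite setDDl (setUidPr s1) cardsD h2.
- have h2 : ball E v k.+1 :&: S = ball E v k.+1 by apply/setIidPl.
  have h1 : ball E v k.+1 :&: ball E v k = ball E v k by apply/setIidPr.
  by rewrite setIDA h2 cardsD h1.
Qed.

Lemma sep_closed (T : finType) (e : rel T) (S : {set T}) (E : {set T * T}) (X : {set T}) :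
  closed S E X -> is_separation S E X (S :\: X).
Proof.
move=> hX; apply/andP; split.
  move: hX => /andP [h _].
  have hX' : S :&: X = X by apply/setIidPr.
  by rewrite -[in X in _ == X](setID S X) hX'.
apply/forallP => [[x y]]; apply/implyP => hxy /=; rewrite !in_setD.
apply/negP => /andP [/andP [_ hx] /andP [hy _]].
by rewrite (closedP hX hxy hx) in hy.
Qed.

Lemma closed_cards (T : finType) (S : {set T}) (E : {set T * T}) (X : {set T}) :
  closed S E X ->
  [/\ #|X :\: (S :\: X)| = #|X|, #|(S :\: X) :\: X| = #|S| - #|X| &
      #|X :&: (S :\: X)| = 0 ].
Proof.
move=> /andP [hX _].
have h1 : S :&: X = X by apply/setIidPr.
have h2 : X :&: S = X by apply/setIidPl.
have h3 : X :\: S = set0 by apply/eqP; rewrite setD_eq0.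
split.
- by rewrite setDDr setIid h3 set0U.
- by rewrite setDDl setUid cardsD h1.
- by rewrite setIDA h2 setDv cards0.
Qed.

Lemma sep_single (T : finType) (e : rel T) (S : {set T}) (E : {set T * T}) v :
  v \in S -> is_separation S E [set v] S.
Proof.
move=> hv; apply/andP; split.
  by apply/eqP; apply/setUidPr; rewrite sub1set.
apply/forallP => [[x y]]; apply/implyP => hxy /=; rewrite !in_setD.
apply/negP => /andP [/andP [hx1 hx2] _]; move: hx2; rewrite inE => /eqP hxv.
by rewrite hxv hv in hx1.
Qed.

Lemma single_cards (T : finType) (S : {set T}) v :
  v \in S ->
  [/\ #|[set v] :\: S| = 0, #|S :\: [set v]| = #|S| - 1 & #|[set v] :&: S| = 1 ].
Proof.
move=> hv; split.
- by apply/eqP; rewrite cards_eq0 setD_eq0 sub1set.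
- by rewrite cardsD (setIidPr _) ?cards1 // sub1set.
- by rewrite (setIidPl _) ?cards1 // sub1set.
Qed.

Lemma bigmin_le (I : finType) (P : pred I) (F : I -> nat) a i :
  P i -> \big[minn/a]_(j | P j) F j <= F i.
Proof.
move=> Pi; rewrite -big_filter.
have : i \in [seq j <- index_enum I | P j] by rewrite mem_filter Pi mem_index_enum.
elim: [seq j <- index_enum I | P j] => // j r IH.
rewrite in_cons big_cons => /orP [/eqP ->|/IH h]; first exact: geq_minl.
exact: leq_trans (geq_minr _ _) h.
Qed.

Lemma bigmin_le_idx (I : finType) (P : pred I) (F : I -> nat) a :
  \big[minn/a]_(j | P j) F j <= a.
Proof. by elim/big_rec: _ => // i y _ hy; exact: leq_trans (geq_minr _ _) hy. Qed.

Local Open Scope ring_scope.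

Lemma main_sep (R : realType) (c : R) (T : finType) (e : rel T) (hc : 1 <= c)
  (hg : forall r : nat, (0 < r)%N -> (growth e r)%:R <= c * r%:R)
  (S : {set T}) (E : {set T * T}) :
  is_subgraph e S E ->
  exists A B, [&& is_separation S E A B, balanced (1 - 1/(4*c)) S A B
                 & (#|A :&: B|%:R < 2 * c)].
Proof.
move=> hs.
set n := #|S|.
set q : R := n%:R / (4 * c).
have hc0 : 0 < c by lra.
have hcn : c != 0 by rewrite gt_eqF.
have han : (1 - 1/(4*c)) * n%:R = n%:R - q by rewrite /q; field.
have hqc : q * (4 * c) = n%:R by rewrite /q; field.
have hn0 : 0 <= n%:R :> R by rewrite ler0n.
have hq0 : 0 <= q by rewrite /q divr_ge0 // mulr_ge0 //; lra.
have hq4 : 4 * q <= n%:R by nra.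
have hb : forall v (r : nat), (0 < r)%N -> #|ball E v r|%:R <= c * r%:R.
  move=> v r hr; apply: le_trans _ (hg r hr); rewrite ler_nat.
  exact: (ball_growth v r hs).
rewrite /balanced han.
case: (boolP [exists v in S, exists j : 'I_#|T|.+1, q <= #|ball E v j|%:R]).
  move=> /existsP [v /andP [hv /existsP [j hj]]].
  have exP : exists i, q <= #|ball E v i|%:R by exists j.
  case: (ex_minnP exP) => m hm hmin.
  case: m hm hmin => [|k] hm hmin.
    exists [set v], S.
    case: (single_cards hv) => -> h2 ->.
    rewrite sep_single //= h2.
    have hn1 : (1 <= n)%N by apply/card_gt0P; exists v.
    rewrite natrB // -/n; move: hm; rewrite /= cards1 => hm.
    apply/andP; split; [apply/andP; split|]; lra.
  have hbk : #|ball E v k|%:R < q.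
    rewrite ltNge; apply/negP => h; have := hmin k h; by rewrite ltnn.
  have hlt : (#|ball E v k| < #|ball E v k.+1|)%N.
    rewrite -(ltr_nat R); lra.
  have hk1 : (k.+1 <= #|ball E v k|)%N by apply: (ball_card_lb hlt); apply: leqnSn.
  have hk1R : k.+1%:R <= #|ball E v k|%:R :> R by rewrite ler_nat.
  pose good (t : nat) := [&& #|ball E v (k + t)|%:R <= n%:R - q,
      q <= #|ball E v (k + t).+1|%:R
    & (#|ball E v (k + t).+1| - #|ball E v (k + t)|)%N%:R < 2 * c].
  case: (boolP [exists t : 'I_k.+1, good t]).
    move=> /existsP [t /and3P [g1 g2 g3]].
    exists (ball E v (k + t).+1), (S :\: ball E v (k + t)).
    case: (layer_cards (k + t) hs hv) => -> -> ->.
    rewrite (sep_layer (k + t) hs hv) /= g1 g3 andbT /=.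
    have hle : (#|ball E v (k + t).+1| <= n)%N.
      by apply: subset_leq_card; apply: (ball_sub _ hs hv).
    rewrite natrB //; lra.
  move=> /existsPn hnone; exfalso.
  have hb2k : #|ball E v (k + k)|%:R <= n%:R - q.
    case: (posnP k) => hk0.
      by rewrite hk0 addn0; rewrite hk0 in hbk; lra.
    have := hb v (k + k)%N (ltn_addl k hk0).
    rewrite natrD => h.
    have hkk : k%:R < k.+1%:R :> R by rewrite ltr_nat.
    have hkq : k%:R < q by lra.
    have : c * k%:R < c * q by nra.
    nra.
  have hlay : forall t, (t <= k)%N ->
      2 * c <= #|ball E v (k + t).+1|%:R - #|ball E v (k + t)|%:R.
    move=> t ht.
    have := hnone (Ordinal (ht : (t < k.+1)%N)); rewrite /good /= negb_and.
    have h1 : #|ball E v (k + t)|%:R <= n%:R - q.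
      apply: le_trans hb2k; rewrite ler_nat; apply: ball_card_mono.
      by rewrite leq_add2l.
    have h2 : q <= #|ball E v (k + t).+1|%:R.
      apply: le_trans hm _; rewrite ler_nat; apply: ball_card_mono.
      by rewrite ltnS leq_addr.
    rewrite h1 h2 /= -leNgt natrB; first by [].
    exact: (ball_card_mono E v (leqnSn (k + t))).
  have hind : forall t, (t <= k)%N ->
      #|ball E v k|%:R + 2 * c * t.+1%:R <= #|ball E v (k + t).+1|%:R.
    elim => [|t IH] ht.
      by have := hlay 0%N isT; rewrite addn0; lra.
    have := IH (ltnW ht); have := hlay t.+1 ht.
    rewrite !addnS -!natr1; lra.
  have := hind k (leqnn k); have := hb v (k + k).+1 isT.
  rewrite -!natr1 natrD; rewrite -natr1 in hk1R.
  have hk0 : 0 <= k%:R :> R by rewrite ler0n.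
  nra.
move=> /existsPn hsmall.
have hsm : forall v, v \in S -> forall j : 'I_#|T|.+1, #|ball E v j|%:R < q.
  move=> v hv j; have := hsmall v; rewrite hv /= => /existsPn /(_ j).
  by rewrite ltNge.
case: (posnP n) => hn.
  exists set0, (S :\: set0).
  have hcl : closed S E set0.
    by rewrite /closed sub0set; apply/forallP => p; apply/implyP => _; rewrite inE.
  case: (closed_cards hcl) => -> -> ->.
  rewrite (sep_closed e hcl) /= cards0 -/n hn subnn /=; rewrite hn in hq4.
  apply/andP; split; [apply/andP; split|]; lra.
pose P (X : {set T}) := closed S E X && (4 * #|X| < n)%N.
have P0 : P set0.
  by rewrite /P cards0 muln0 hn andbT /closed sub0set; apply/forallP => p; apply/implyP => _; rewrite inE.
case: (@arg_maxnP _ set0 P (fun X : {set T} => #|X|) P0) => X /andP [hXc hX4] hXmax.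
have : S :\: X != set0.
  rewrite -card_gt0 cardsD; move/andP: (hXc) => [hXS _].
  rewrite (setIidPr hXS) subn_gt0; apply: leq_ltn_trans hX4.
  by rewrite leq_pmull.
case/set0Pn => v; rewrite in_setD => /andP [hvX hv].
case: (ball_fix E v) => k hk.
set C := ball E v k.
have hCc : closed S E C := ball_closed hs hv hk.
have hCX : [disjoint C & X] := ball_disj k hs hXc hvX.
have hYc : closed S E (X :|: C) := closedU hXc hCc.
have hYcard : #|X :|: C| = (#|X| + #|C|)%N.
  rewrite cardsU; rewrite disjoint_sym in hCX.
  by rewrite (disjoint_setI0 hCX) cards0 subn0.
have hC1 : (1 <= #|C|)%N by apply/card_gt0P; exists v; exact: ball0_in.
have hY4 : (n <= 4 * #|X :|: C|)%N.
  rewrite leqNgt; apply/negP => h.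
  have := hXmax (X :|: C); rewrite /P hYc h => /(_ isT) /=.
  rewrite hYcard -[X in (_ <= X)%N]addn0 leq_add2l leqn0 => /eqP hC0.
  by rewrite hC0 in hC1.
have hCq : #|C|%:R < q := hsm v hv k.
have hYS : (#|X :|: C| <= n)%N by apply: subset_leq_card; move/andP: hYc => [].
exists (X :|: C), (S :\: (X :|: C)).
case: (closed_cards hYc) => -> -> ->.
rewrite (sep_closed e hYc) /= natrB //.
have hX4R : 4 * #|X|%:R < n%:R :> R.
  by rewrite -(natrM R 4) ltr_nat.
have hY4R : n%:R <= 4 * #|X :|: C|%:R :> R.
  by rewrite -(natrM R 4) ler_nat.
rewrite hYcard natrD in hY4R *.
apply/andP; split; [apply/andP; split|]; lra.
Qed.

Unset Implicit Arguments.

Theorem lemma6 (R : realType) (c : R) (T : finType) (e : rel T)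
  (e_sym : symmetric e) (e_irr : irreflexive e) (hc : 1 <= c)
  (hgrowth : forall r : nat, (0 < r)%N -> (growth e r)%:R <= c * r%:R) :
  (sep_number e (1 - 1 / (4 * c)))%:R < 2 * c.
Proof.
have hc0 : 0 < c by lra.
have exP : exists s : nat, s%:R < 2 * c by exists 0%N; lra.
have bnd : forall s : nat, s%:R < 2 * c -> (s <= Num.Def.archi_bound (2 * c))%N.
  move=> s hs; apply: ltnW; rewrite -(ltr_nat R).
  apply: lt_trans hs _; apply: archi_boundP; lra.
case: (ex_maxnP exP bnd) => s hs hmax.
have hok : sep_ok e (1 - 1 / (4 * c)) s.
  apply/forallP => S; apply/forallP => E; apply/implyP => hsub.
  case: (main_sep hc hgrowth hsub) => A [B /and3P [h1 h2 h3]].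
  apply/existsP; exists A; apply/existsP; exists B.
  by rewrite h1 h2 /sep_order hmax.
have hle : (sep_number e (1 - 1 / (4 * c)) <= s)%N.
  rewrite /sep_number.
  case: (ltnP s #|T|.+1) => hsT.
    exact: (bigmin_le (fun i : 'I_#|T|.+1 => nat_of_ord i) #|T| (i := Ordinal hsT)).
  apply: leq_trans (bigmin_le_idx _ _ _) _.
  by apply: ltnW.
apply: le_lt_trans hs; by rewrite ler_nat.
Qed.
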